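(* Let $H=\{h_1,h_2,h_3\}$ with $\kappa_{h}=2$ for all $h\in H$, $D=\{f,m,s_1,s_2,s_3,s_4\}$ with single doctors $S=\{s_1,s_2,s_3,s_4\}$ and unique couple $c=\{f,m\}$. Suppose the hospitals' preferences over individual doctors are (best first, $\emptyset$ last): $\tilde P_{h_1}: s_3,s_4,s_1,f,m,s_2$; $\tilde P_{h_2}: s_4,s_3,f,m,s_1,s_2$; $\tilde P_{h_3}: s_3,s_4,m,f,s_1,s_2$, with each $P_h$ an arbitrary responsive extension of $\tilde P_h$ to feasible sets. Suppose the doctors' preferences are (best first, $\emptyset$ last): $P_{s_1}: h_2,h_1,h_3$; $P_{s_2}: h_3,h_1,h_2$; $P_{s_3}: h_1,h_2,h_3$; $P_{s_4}: h_2,h_1,h_3$; $P_f: h_1,h_3,h_2$; $P_m: h_2,h_1,h_3$; and the couple's preference $P_c$ ranks $(h_1,h_2),(h_1,h_1),(h_1,h_3),(h_3,h_3),(h_3,h_2),(h_3,h_1),(h_2,h_2),(h_2,h_1),(h_2,h_3)$ in this order, followed by all pairs in $\bar H^2\setminus H^2$ (in any order). Then no stable matching exists at this preference profile.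
   Context: Standing model. Let $H$ be a finite set of hospitals with $|H|\ge 2$; each $h\in H$ has a capacity $\kappa_h\in\mathbb{N}$ with $\kappa_h\ge 2$. Write $\bar H=H\cup\{\emptyset\}$, where being assigned $\emptyset$ means being unmatched. The finite set of doctors is $D=F\cup M\cup S$ (pairwise disjoint), with $F=\{f_1,\dots,f_k\}$, $M=\{m_1,\dots,m_k\}$, $k\ge 1$; the set of couples is $C=\{\{f_1,m_1\},\dots,\{f_k,m_k\}\}$, and doctors in $S$ are called single doctors. Assume $|D|\ge 4$ and $\sum_{h\in H}\kappa_h=|D|$. A matching is a map $\mu$ assigning to each $h\in H$ a set $\mu(h)\subseteq D$ with $|\mu(h)|\le\kappa_h$ and to each doctor $d$ an element $\mu(d)\in\bar H$, such that $\mu(d)=h$ iff $d\in\mu(h)$; for a couple $c=\{f,m\}$ write $\mu(c)=(\mu(f),\mu(m))$. For a set $X$, $\mathbb{L}(X)$ is the set of strict linear orders (preferences) on $X$; for a preference $P$, $R$ denotes its reflexive version ($xRy$ iff $x=y$ or $xPy$), and $r_1(P)$ its top element. Each hospital $h$ has a preference $\tilde P_h\in\mathbb{L}(D\cup\{\emptyset\})$ over individual doctors with $d\,\tilde P_h\,\emptyset$ for all $d\in D$, and a preference $P_h$ over the feasible sets $\{D'\subseteq D:|D'|\le\kappa_h\}$ that is responsive with respect to $\tilde P_h$: (i) on singletons and $\emptyset$, $P_h$ agrees with $\tilde P_h$; (ii) for all $D'\subsetneq D$ and all $D_1,D_2\subseteq D\setminus D'$ with $|D'\cup D_1|\le\kappa_h$,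 $|D'\cup D_2|\le\kappa_h$: $(D'\cup D_1)\,P_h\,(D'\cup D_2)$ iff $D_1\,P_h\,D_2$. Each doctor $d\in D$ has a preference $P_d\in\mathbb{L}(\bar H)$ with $h\,P_d\,\emptyset$ for all $h\in H$. Each couple $c=\{f,m\}$ has a preference $P_c\in\mathbb{L}(\bar H^2)$, where the pair $(h,h')$ means $f$ is assigned $h$ and $m$ is assigned $h'$; every pair in $H^2$ is preferred under $P_c$ to every pair in $\bar H^2\setminus H^2$. A preference profile consists of such preferences for all doctors, all couples and all hospitals. Blocking and stability. At a matching $\mu$, hospital $h$ is interested in a set $D'\subseteq D$ if there is $D''\subseteq\mu(h)$ with $|(\mu(h)\setminus D'')\cup D'|\le\kappa_h$ and $((\mu(h)\setminus D'')\cup D')\,P_h\,\mu(h)$. A pair $(h,s)$ with $h\in H$, $s\in S$ blocks $\mu$ if $h\,P_s\,\mu(s)$ and $h$ is interested in $\{s\}$. For a couple $c=\{f,m\}$ and $h_f,h_m\in H$, $((h_f,h_m),c)$ blocks $\mu$ if $(h_f,h_m)\,P_c\,\mu(c)$ and: (i) if $h_f\ne h_m$, $\mu(f)\ne h_f$ and $\mu(m)\ne h_m$, then $h_f$ is interested in $\{f\}$ and $h_m$ is interested in $\{m\}$; (ii) if $h_f\ne h_m$ and, for $\{x,y\}=\{f,m\}$, $\mu(x)=h_x$ and $\mu(y)\neq h_y$, then $h_y$ is interested in $\{y\}$; (iii) if $h_f=h_m=h$, then $h$ is interested in $\{f,m\}$. A matching is stable if it is blocked by no such pair. *)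

(* Defs.v *)
From mathcomp Require Import all_boot.
Set Implicit Arguments. Unset Strict Implicit. Unset Printing Implicit Defensive.

(* Hospitals h1,h2,h3 are the ordinals 0,1,2 of 'I_3.
   Doctors: f = 0, m = 1, s1 = 2, s2 = 3, s3 = 4, s4 = 5 in 'I_6.
   Being unmatched (emptyset) is [None : option Hosp]. *)
Definition Hosp := 'I_3.
Definition Doc := 'I_6.

Definition kappa : nat := 2.

Definition fD : Doc := @Ordinal 6 0 isT.
Definition mD : Doc := @Ordinal 6 1 isT.
Definition isSingle (d : Doc) : bool := 2 <= val d.

Definition hlist (h : Hosp) : seq nat :=
  match val h with
  | 0 => [:: 4; 5; 2; 0; 1; 3]
  | 1 => [:: 5; 4; 0; 1; 2; 3]
  | _ => [:: 4; 5; 1; 0; 2; 3]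
  end.
Definition hrank (h : Hosp) (d : Doc) : nat := index (val d) (hlist h).

Definition tildeP (h : Hosp) (x y : option Doc) : bool :=
  match x, y with
  | Some d, Some d' => hrank h d < hrank h d'
  | Some _, None => true
  | None, _ => false
  end.

Definition setof (x : option Doc) : {set Doc} :=
  match x with Some d => [set d] | None => set0 end.

Definition feasible (A : {set Doc}) : bool := #|A| <= kappa.

Definition responsive_pref (h : Hosp) (P : rel {set Doc}) : Prop :=
  [/\ (forall A, feasible A -> ~~ P A A),
      (forall A B C, feasible A -> feasible B -> feasible C ->
          P A B -> P B C -> P A C),
      (forall A B, feasible A -> feasible B -> A != B -> P A B || P B A),
      (forall x y : option Doc, P (setof x) (setof y) = tildeP h x y) &
      (forall D' D1 D2 : {set Doc}, D' \proper [set: Doc] ->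
          [disjoint D1 & D'] -> [disjoint D2 & D'] ->
          feasible (D' :|: D1) -> feasible (D' :|: D2) ->
          P (D' :|: D1) (D' :|: D2) = P D1 D2)].

Definition dlist (d : Doc) : seq nat :=
  match val d with
  | 0 => [:: 0; 2; 1]
  | 1 => [:: 1; 0; 2]
  | 2 => [:: 1; 0; 2]
  | 3 => [:: 2; 0; 1]
  | 4 => [:: 0; 1; 2]
  | _ => [:: 1; 0; 2]
  end.
Definition drank (d : Doc) (o : option Hosp) : nat :=
  match o with None => 3 | Some h => index (val h) (dlist d) end.
Definition dprefers (d : Doc) (a b : option Hosp) : bool := drank d a < drank d b.

(* The couple's ranking of H^2 (pairs (h_f, h_m)), best first. *)
Definition clist : seq (nat * nat) :=
  [:: (0,1); (0,0); (0,2); (2,2); (2,1); (2,0); (1,1); (1,0); (1,2)].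
Definition crank (a b : Hosp) : nat := index (val a, val b) clist.

Definition inH2 (x : option Hosp * option Hosp) : bool :=
  (x.1 != None) && (x.2 != None).

Definition couple_pref (Pc : rel (option Hosp * option Hosp)) : Prop :=
  [/\ (forall x, ~~ Pc x x),
      (forall x y z, Pc x y -> Pc y z -> Pc x z),
      (forall x y, x != y -> Pc x y || Pc y x),
      (forall a1 a2 b1 b2 : Hosp,
          Pc (Some a1, Some a2) (Some b1, Some b2) = (crank a1 a2 < crank b1 b2)) &
      (forall x y, inH2 x -> ~~ inH2 y -> Pc x y)].

Definition assigned (mu : Doc -> option Hosp) (h : Hosp) : {set Doc} :=
  [set d | mu d == Some h].

Definition is_matching (mu : Doc -> option Hosp) : Prop :=
  forall h, #|assigned mu h| <= kappa.

Definition interested (PH : Hosp -> rel {set Doc}) (mu : Doc -> option Hosp)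
    (h : Hosp) (D' : {set Doc}) : Prop :=
  exists D'' : {set Doc},
    [/\ D'' \subset assigned mu h,
        #|(assigned mu h :\: D'') :|: D'| <= kappa &
        PH h ((assigned mu h :\: D'') :|: D') (assigned mu h)].

Definition single_blocks PH mu (h : Hosp) (s : Doc) : Prop :=
  [/\ isSingle s, dprefers s (Some h) (mu s) & interested PH mu h [set s]].

Definition couple_blocks PH (Pc : rel (option Hosp * option Hosp)) mu
    (hf hm : Hosp) : Prop :=
  [/\ Pc (Some hf, Some hm) (mu fD, mu mD),
      (hf != hm -> mu fD != Some hf -> mu mD != Some hm ->
          interested PH mu hf [set fD] /\ interested PH mu hm [set mD]),
      (hf != hm -> mu fD = Some hf -> mu mD != Some hm ->
          interested PH mu hm [set mD]),
      (hf != hm -> mu mD = Some hm -> mu fD != Some hf ->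
          interested PH mu hf [set fD]) &
      (hf = hm -> interested PH mu hf [set fD; mD])].

Definition stable PH Pc mu : Prop :=
  is_matching mu /\
  (forall h s, ~ single_blocks PH mu h s) /\
  (forall hf hm, ~ couple_blocks PH Pc mu hf hm).

(* Main.v *)
Require Import Defs.
From mathcomp Require Import all_boot.
From Stdlib Require Import FunctionalExtensionality.
Set Implicit Arguments. Unset Strict Implicit. Unset Printing Implicit Defensive.

Definition d0 : Doc := @Ordinal 6 0 isT.
Definition d1 : Doc := @Ordinal 6 1 isT.
Definition d2 : Doc := @Ordinal 6 2 isT.
Definition d3 : Doc := @Ordinal 6 3 isT.
Definition d4 : Doc := @Ordinal 6 4 isT.
Definition d5 : Doc := @Ordinal 6 5 isT.
Definition h0 : Hosp := @Ordinal 3 0 isT.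
Definition h1 : Hosp := @Ordinal 3 1 isT.
Definition h2 : Hosp := @Ordinal 3 2 isT.
Definition docs := [:: d0; d1; d2; d3; d4; d5].
Definition hosps := [:: h0; h1; h2].
Definition opts : seq (option Hosp) := [:: None; Some h0; Some h1; Some h2].

Definition cnt (mu : Doc -> option Hosp) h := count (fun d => mu d == Some h) docs.

Definition sintb mu h x :=
  (cnt mu h <= 1) || has (fun d => (mu d == Some h) && tildeP h (Some x) (Some d)) docs.

Definition cint1 mu h (a b : Doc) :=
  [&& mu a == Some h, mu b != Some h &
   (cnt mu h <= 1) || has (fun d => [&& mu d == Some h, d != a & tildeP h (Some b) (Some d)]) docs].

Definition cintb mu h := cint1 mu h fD mD || cint1 mu h mD fD.

Definition cpref (hf hm : Hosp) (y : option Hosp * option Hosp) : bool :=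
  match y with
  | (Some a, Some b) => crank hf hm < crank a b
  | _ => true end.

Definition sblockb mu := has (fun h => has (fun s =>
  [&& isSingle s, dprefers s (Some h) (mu s), mu s != Some h & sintb mu h s]) docs) hosps.

Definition ccondb mu (hf hm : Hosp) : bool :=
  if hf == hm then cintb mu hf else
  [&& (mu fD != Some hf) && (mu mD != Some hm) ==> sintb mu hf fD && sintb mu hm mD,
      (mu fD == Some hf) && (mu mD != Some hm) ==> sintb mu hm mD &
      (mu mD == Some hm) && (mu fD != Some hf) ==> sintb mu hf fD].

Definition cblockb mu := has (fun hf => has (fun hm =>
  cpref hf hm (mu fD, mu mD) && ccondb mu hf hm) hosps) hosps.

Definition matchb mu := all (fun h => cnt mu h <= 2) hosps.

Definition mk (a : seq (option Hosp)) (d : Doc) : option Hosp := nth None a (val d).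

Definition allmu :=
  all (fun a0 => all (fun a1 => all (fun a2 => all (fun a3 => all (fun a4 => all (fun a5 =>
    let mu := mk [:: a0; a1; a2; a3; a4; a5] in ~~ matchb mu || sblockb mu || cblockb mu)
  opts) opts) opts) opts) opts) opts.

Lemma allmu_true : allmu = true.
Proof. Time vm_compute. reflexivity. Qed.

Lemma enum_doc : enum 'I_6 = docs.
Proof. apply: (inj_map val_inj); rewrite val_enum_ord. by []. Qed.

Lemma card_cnt mu h : #|assigned mu h| = cnt mu h.
Proof.
rewrite /assigned cardsE cardE /enum_mem -enumT enum_doc /cnt size_filter.
by [].
Qed.

Lemma proper_small (A : {set Doc}) : #|A| <= 2 -> A \proper [set: Doc].
Proof.
move=> HA; rewrite properT; apply/negP => /eqP E.
by move: HA; rewrite E cardsT card_ord.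
Qed.

Lemma tildeP_set h P (H : responsive_pref h P) (x y : option Doc) :
  P (setof x) (setof y) = tildeP h x y.
Proof. by case: H. Qed.

Lemma card_add1 (B : {set Doc}) x : #|B :|: [set x]| <= #|B|.+1.
Proof. by rewrite setUC cardsU1; case: (x \in B). Qed.

Lemma disj0 (B : {set Doc}) : [disjoint set0 & B].
Proof. by rewrite -setI_eq0 set0I. Qed.

Lemma add_core h P (H : responsive_pref h P) (B : {set Doc}) x :
  #|B| <= 1 -> x \notin B -> P (B :|: [set x]) B.
Proof.
move=> HB Hx; case: (H) => _ _ _ H4 H5.
have -> : P (B :|: [set x]) B = P (B :|: [set x]) (B :|: set0) by rewrite setU0.
rewrite H5.
- by have := H4 (Some x) None.
- by apply: proper_small; apply: leq_trans HB _.
- by rewrite disjoints1.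
- exact: disj0.
- by rewrite /feasible; apply: leq_trans (card_add1 _ _) _.
- by rewrite /feasible setU0; apply: leq_trans HB _.
Qed.

Lemma swap_core h P (H : responsive_pref h P) (A : {set Doc}) x d :
  #|A| <= 2 -> x \notin A -> d \in A -> tildeP h (Some x) (Some d) ->
  P ((A :\: [set d]) :|: [set x]) A.
Proof.
move=> HA Hx Hd Hxd; case: (H) => _ _ _ H4 H5.
have EA : A = (A :\: [set d]) :|: [set d].
  apply/setP => z; rewrite !inE; case: (eqVneq z d) => [->|ne]; first by rewrite Hd.
  by rewrite orbF.
have Hc : #|A :\: [set d]| <= 1.
  by move: HA; rewrite (cardsD1 d A) Hd add1n ltnS.
rewrite {2}EA H5.
- by rewrite (H4 (Some x) (Some d)).
- by apply: proper_small; apply: leq_trans Hc _.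
- by rewrite disjoints1 !inE negb_and Hx orbT.
- by rewrite disjoints1 !inE eqxx.
- by rewrite /feasible; apply: leq_trans (card_add1 _ _) _.
- by rewrite /feasible; apply: leq_trans (card_add1 _ _) _.
Qed.

Lemma setU_pair (B : {set Doc}) a b : a \in B -> B :|: [set a; b] = B :|: [set b].
Proof.
move=> Ha; apply/setP => z; rewrite !inE.
by case: (eqVneq z a) => [->|_]; rewrite ?Ha.
Qed.

Lemma sint_sound PH mu h x : (forall h, responsive_pref h (PH h)) ->
  cnt mu h <= 2 -> mu x != Some h -> sintb mu h x -> interested PH mu h [set x].
Proof.
move=> Hr Hc Hx; have HxA : x \notin assigned mu h by rewrite inE.
have HA : #|assigned mu h| <= 2 by rewrite card_cnt.
case/orP => [H1 | /hasP [d _ /andP [Hd Hxd]]].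
- exists set0; rewrite setD0; split.
  + exact: sub0set.
  + by apply: leq_trans (card_add1 _ _) _; rewrite ltnS card_cnt.
  + by apply: add_core => //; rewrite card_cnt.
- have HdA : d \in assigned mu h by rewrite inE.
  exists [set d]; split.
  + by rewrite sub1set.
  + apply: leq_trans (card_add1 _ _) _.
    by move: HA; rewrite (cardsD1 d) HdA add1n ltnS.
  + exact: swap_core.
Qed.

Lemma cint_sound PH mu h a b : (forall h, responsive_pref h (PH h)) ->
  cnt mu h <= 2 -> cint1 mu h a b -> interested PH mu h [set a; b].
Proof.
move=> Hr Hc /and3P [Ha Hb Hrest].
have HbA : b \notin assigned mu h by rewrite inE.
have HaA : a \in assigned mu h by rewrite inE.
have HA : #|assigned mu h| <= 2 by rewrite card_cnt.
case/orP: Hrest => [H1 | /hasP [d _ /and3P [Hd Hda Hbd]]].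
- exists set0; rewrite setD0 setU_pair //; split.
  + exact: sub0set.
  + by apply: leq_trans (card_add1 _ _) _; rewrite ltnS card_cnt.
  + by apply: add_core => //; rewrite card_cnt.
- have HdA : d \in assigned mu h by rewrite inE.
  exists [set d]; rewrite setU_pair; last by rewrite !inE eq_sym Hda.
  split.
  + by rewrite sub1set.
  + apply: leq_trans (card_add1 _ _) _.
    by move: HA; rewrite (cardsD1 d) HdA add1n ltnS.
  + exact: swap_core.
Qed.

Lemma pc_sound Pc hf hm y : couple_pref Pc -> cpref hf hm y -> Pc (Some hf, Some hm) y.
Proof.
case=> _ _ _ H4 H5; case: y => [[a|] [b|]] /= H.
- by rewrite H4.
- by apply: H5.
- by apply: H5.
- by apply: H5.
Qed.

Lemma mu_repr (mu : Doc -> option Hosp) :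
  mu = mk [:: mu d0; mu d1; mu d2; mu d3; mu d4; mu d5].
Proof.
apply: functional_extensionality => d; case: d => m Hm; rewrite /mk /=.
do 6 (case: m Hm => [|m] Hm; [by congr mu; apply: val_inj | ]).
by [].
Qed.

Lemma in_opts o : o \in opts.
Proof. by case: o => [[[|[|[|k]]] Hk]|]. Qed.

Lemma key mu : matchb mu -> sblockb mu || cblockb mu.
Proof.
move=> mb; have E := mu_repr mu; have := allmu_true; rewrite /allmu.
move/allP/(_ _ (in_opts (mu d0)))/allP/(_ _ (in_opts (mu d1)))/allP/(_ _ (in_opts (mu d2))).
move/allP/(_ _ (in_opts (mu d3)))/allP/(_ _ (in_opts (mu d4)))/allP/(_ _ (in_opts (mu d5))).
by rewrite /= -E mb.
Qed.

Theorem mainTheorem9 (PH : Hosp -> rel {set Doc})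
    (Pc : rel (option Hosp * option Hosp)) :
  (forall h, responsive_pref h (PH h)) ->
  couple_pref Pc ->
  ~ exists mu : Doc -> option Hosp, stable PH Pc mu.
Proof.
move=> Hr Hc [mu [Hm [Hs Hcb]]].
have Hcap h : cnt mu h <= 2 by rewrite -card_cnt; apply: Hm.
have mb : matchb mu by apply/allP => h _; exact: Hcap h.
case/orP: (key mb).
- case/hasP => h _ /hasP [s _ /and4P [Hsg Hpr Hne Hsi]].
  apply: (Hs h s); split => //; exact: sint_sound.
- case/hasP => hf _ /hasP [hm _ /andP [Hcp Hcc]].
  apply: (Hcb hf hm); move: Hcc; rewrite /ccondb.
  case: (eqVneq hf hm) => [E|Hne]; first subst hm.
  + move=> Hci; split.
    * exact: pc_sound.
    * by move=> H; exfalso; exact: (negP H (eqxx _)).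
    * by move=> H; exfalso; exact: (negP H (eqxx _)).
    * by move=> H; exfalso; exact: (negP H (eqxx _)).
    * move=> _; case/orP: Hci => H; first exact: cint_sound.
      have -> : [set fD; mD] = [set mD; fD] by rewrite setUC.
      exact: cint_sound.
  + case/and3P => I1 I2 I3; split.
    * exact: pc_sound.
    * move=> _ Hf Hm'; have /andP [J1 J2] := implyP I1 (introT andP (conj Hf Hm')).
      by split; apply: sint_sound.
    * move=> _ /eqP Hf Hm'; have J := implyP I2 (introT andP (conj Hf Hm')).
      by apply: sint_sound.
    * move=> _ /eqP Hm' Hf; have J := implyP I3 (introT andP (conj Hm' Hf)).
      by apply: sint_sound.
    * by move=> E; move: Hne; rewrite E eqxx.
Qed.
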